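(* Let $d\ge2$ and let $Q$ be a qplex. (1) If $s_1,\dots,s_{d^2}\in Q\cap S_{\rm o}$ are the vertices of a regular simplex, then $r(i|j)=s_i(j)$ defines a type-preserving measurement for $Q$, with stretched measurement matrix $R_{ij}=(d+1)s_i(j)-\frac1d$. (2) If $R$ is a $d^2\times d^2$ real orthogonal matrix such that $RQ=\{Rq:q\in Q\}$ is a qplex, then $R$ is the stretched measurement matrix of a type-preserving measurement for $Q$.
   Context: Fix an integer $d\ge 2$. $\langle\cdot,\cdot\rangle$ is the standard inner product on $\mathbb{R}^{d^2}$, $\|\cdot\|$ the Euclidean norm. $\Delta=\{p\in\mathbb{R}^{d^2}: p(i)\ge0,\ \sum_ip(i)=1\}$; $H=\{u\in\mathbb{R}^{d^2}:\sum_i u(i)=1\}$; $c=(1/d^2,\dots,1/d^2)$. For $A\subseteq H$ the polar is $A^*=\{u\in H:\langle u,v\rangle\ge\frac{1}{d(d+1)}\ \forall v\in A\}$. Out-ball $B_{\rm o}=\{u\in H:\|u-c\|\le r_{\rm o}\}$, $r_{\rm o}^2=\frac{d-1}{d^2(d+1)}$, boundary sphere $S_{\rm o}$. A qplex is a set $Q\subseteq\Delta\cap B_{\rm o}$ with $Q^*=Q$. A measurement (with $d^2$ outcomes) is an array of reals $r(i|j)\ge0$, $i,j\in\{1,\dots,d^2\}$, with $\sum_i r(i|j)=1$ for every $j$. For a qplex $Q$ and $q\in Q$, define $q_r(i)=\sum_j\big[(d+1)q(j)-\frac1d\big]r(i|j)$ and $Q_r=\{q_r:q\in Q\}$. The measurement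 is type-preserving for $Q$ if $Q_r$ is a qplex, and $Q$-preserving if $Q_r=Q$. Its stretched measurement matrix is $R_{ij}=(d+1)r(i|j)-\frac1d\sum_k r(i|k)$, so that $q_r=Rq$. Points $s_1,\dots,s_{d^2}$ are vertices of a regular simplex if they are distinct and all pairwise distances are equal. *)

(* Defs.v *)
From HB Require Import structures.
From mathcomp Require Import all_boot all_order all_algebra.
Set Implicit Arguments. Unset Strict Implicit. Unset Printing Implicit Defensive.
Import Order.TTheory GRing.Theory Num.Theory.
Local Open Scope ring_scope.

Section Qplex.
Variables (R : realFieldType) (d : nat).

Definition vec := 'I_(d ^ 2) -> R.

Definition dot (u v : vec) : R := \sum_i u i * v i.
Definition normsq (u : vec) : R := dot u u.
Definition vsub (u v : vec) : vec := fun i => u i - v i.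

Definition inDelta (p : vec) : Prop := (forall i, 0 <= p i) /\ \sum_i p i = 1.
Definition inH (u : vec) : Prop := \sum_i u i = 1.

Definition cvec : vec := fun _ => 1 / (d ^ 2)%:R.

Definition polar (A : vec -> Prop) : vec -> Prop :=
  fun u => inH u /\ forall v, A v -> 1 / (d * (d + 1))%:R <= dot u v.

Definition ro2 : R := (d - 1)%:R / ((d ^ 2)%:R * (d + 1)%:R).

Definition inBo (u : vec) : Prop := inH u /\ normsq (vsub u cvec) <= ro2.
Definition inSo (u : vec) : Prop := inH u /\ normsq (vsub u cvec) = ro2.

Definition qplex (Q : vec -> Prop) : Prop :=
  (forall q, Q q -> inDelta q /\ inBo q) /\ (forall u, polar Q u <-> Q u).

(* measurement with d^2 outcomes: r i j = r(i|j) *)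
Definition measurement (r : 'I_(d ^ 2) -> 'I_(d ^ 2) -> R) : Prop :=
  (forall i j, 0 <= r i j) /\ (forall j, \sum_i r i j = 1).

Definition qr (r : 'I_(d ^ 2) -> 'I_(d ^ 2) -> R) (q : vec) : vec :=
  fun i => \sum_j ((d + 1)%:R * q j - 1 / d%:R) * r i j.

Definition image_r (Q : vec -> Prop) (r : 'I_(d ^ 2) -> 'I_(d ^ 2) -> R) : vec -> Prop :=
  fun u => exists2 q, Q q & u = qr r q.

Definition type_preserving (Q : vec -> Prop) r : Prop :=
  measurement r /\ qplex (image_r Q r).

Definition Q_preserving (Q : vec -> Prop) r : Prop :=
  measurement r /\ (forall u, image_r Q r u <-> Q u).

Definition stretched (r : 'I_(d ^ 2) -> 'I_(d ^ 2) -> R) : 'M[R]_(d ^ 2) :=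
  \matrix_(i, j) ((d + 1)%:R * r i j - 1 / d%:R * \sum_k r i k).

Definition mxact (M : 'M[R]_(d ^ 2)) (q : vec) : vec := fun i => \sum_j M i j * q j.
Definition image_mx (M : 'M[R]_(d ^ 2)) (Q : vec -> Prop) : vec -> Prop :=
  fun u => exists2 q, Q q & u = mxact M q.

(* vertices of a regular simplex: distinct, all pairwise distances equal
   (stated via squared distances, equivalent since distances are >= 0) *)
Definition regular_simplex (s : 'I_(d ^ 2) -> vec) : Prop :=
  injective s /\
  exists a : R, forall i j, i != j -> normsq (vsub (s i) (s j)) = a.

Definition orthogonal_mx (M : 'M[R]_(d ^ 2)) : Prop := M^T *m M = 1%:M.

End Qplex.

(* Main.v *)
Require Import Defs.
From HB Require Import structures.
From mathcomp Require Import all_boot all_order all_algebra.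
From mathcomp Require Import ring lra.
From Stdlib Require Import FunctionalExtensionality PropExtensionality.
Import Order.TTheory GRing.Theory Num.Theory.
Local Open Scope ring_scope.

Section Helpers.
Variables (R : realFieldType) (d : nat).
Local Notation N := (d ^ 2)%N.
Local Notation vec := (vec R d).

Lemma sum_delta (F : 'I_N -> R) k : \sum_j F j * (j == k)%:R = F k.
Proof.
rewrite (bigD1 k) //= eqxx mulr1 big1 ?addr0 // => j /negbTE ->.
by rewrite mulr0.
Qed.

Definition cv (u : vec) : 'cV[R]_N := \col_j u j.

Lemma cv_inj (u v : vec) : cv u = cv v -> u = v.
Proof.
move=> h; apply: functional_extensionality => j.
by have := congr1 (fun M : 'cV[R]_N => M j 0) h; rewrite !mxE.
Qed.

Lemma dotE (u v : vec) : dot u v = ((cv u)^T *m cv v) 0 0.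
Proof. rewrite /dot !mxE; apply: eq_bigr => j _; by rewrite !mxE. Qed.

Lemma cv_mxact (M : 'M[R]_N) (u : vec) : cv (mxact M u) = M *m cv u.
Proof.
apply/matrixP => i j; rewrite (ord1 j) !mxE; apply: eq_bigr => k _; by rewrite !mxE.
Qed.

Lemma dot_mxact (M : 'M[R]_N) (u v : vec) : M^T *m M = 1%:M -> dot (mxact M u) (mxact M v) = dot u v.
Proof.
by move=> h; rewrite !dotE !cv_mxact trmx_mul -mulmxA (mulmxA M^T) h mul1mx.
Qed.

Lemma dot_mxactT (M : 'M[R]_N) (u v : vec) : dot u (mxact M v) = dot (mxact M^T u) v.
Proof. by rewrite !dotE !cv_mxact trmx_mul trmxK mulmxA. Qed.

Lemma mxact_mul (A B : 'M[R]_N) (u : vec) : mxact A (mxact B u) = mxact (A *m B) u.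
Proof. by apply: cv_inj; rewrite !cv_mxact mulmxA. Qed.

Lemma mxact1 (u : vec) : mxact 1%:M u = u.
Proof. by apply: cv_inj; rewrite !cv_mxact mul1mx. Qed.

Lemma mxact_sub (M : 'M[R]_N) (u v : vec) : mxact M (vsub u v) = vsub (mxact M u) (mxact M v).
Proof.
apply: functional_extensionality => i; rewrite /mxact /vsub -sumrB.
by apply: eq_bigr => j _; rewrite mulrBr.
Qed.

Lemma sum_mxact (M : 'M[R]_N) (u : vec) : (forall j, \sum_i M i j = 1) -> \sum_i mxact M u i = \sum_j u j.
Proof.
move=> h; rewrite /mxact exchange_big; apply: eq_bigr => j _.
by rewrite -mulr_suml h mul1r.
Qed.

Lemma sum_aff (x y : vec) a b :
  \sum_k (a * x k + b) * (a * y k + b) =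
  a ^+ 2 * dot x y + a * b * (\sum_k x k + \sum_k y k) + N%:R * b ^+ 2.
Proof.
rewrite (eq_bigr (fun k => a ^+ 2 * (x k * y k) + a * b * (x k + y k) + b ^+ 2));
  last by move=> k _; ring.
rewrite !big_split /= -!mulr_sumr big_split /= sumr_const card_ord mulr_natl.
by rewrite /dot mulrnAr expr2.
Qed.

Lemma normsq_sub (x y : vec) : normsq (vsub x y) = normsq x - 2 * dot x y + normsq y.
Proof.
rewrite /normsq /dot /vsub.
rewrite (eq_bigr (fun k => x k * x k - 2 * (x k * y k) + y k * y k));
  last by move=> k _; ring.
by rewrite big_split /= sumrB -mulr_sumr.
Qed.

Lemma normsq_comb (x y : vec) (a : R) :
  normsq (fun k => x k + a * y k) = normsq x + 2 * a * dot x y + a ^+ 2 * normsq y.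
Proof.
rewrite /normsq /dot.
rewrite (eq_bigr (fun k => x k * x k + 2 * a * (x k * y k) + a ^+ 2 * (y k * y k)));
  last by move=> k _; ring.
by rewrite !big_split /= -!mulr_sumr.
Qed.

Lemma normsq_ge0 (x : vec) : 0 <= normsq x.
Proof. rewrite /normsq /dot; apply: sumr_ge0 => k _; rewrite -expr2; exact: sqr_ge0. Qed.

End Helpers.

Section MatA.
Variables (R : realFieldType) (n : nat).
Local Notation J := (const_mx 1 : 'M[R]_n).

Lemma JJ : J *m J = n%:R *: J.
Proof.
apply/matrixP => i j; rewrite !mxE (eq_bigr (fun _ => 1)); last by move=> k _; rewrite !mxE mulr1.
by rewrite sumr_const card_ord mulr1.
Qed.

Lemma mulJ (a b c e : R) : (a%:M + b *: J) *m (c%:M + e *: J) =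
   (a * c)%:M + (a * e + b * c + n%:R * b * e) *: J.
Proof.
rewrite mulmxDl !mulmxDr !mul_scalar_mx -!scalemxAl mul_mx_scalar -scalemxAr JJ.
rewrite scale_scalar_mx !scalerA -addrA; congr (_ + _); rewrite -!scalerDl; congr (_ *: _); ring.
Qed.

Lemma keyA (U : 'M[R]_n) (x y : R) : (0 < n)%N -> U *m J = 0 ->
  U *m U^T = x%:M + y *: J -> x != 0 -> x + n%:R * y = 0.
Proof.
move=> hn hUJ hG hx; apply/eqP; apply: contraT => hl.
pose H := x^-1%:M + (- (x^-1 * (y / (x + n%:R * y)))) *: J.
have hGH : U *m (U^T *m H) = 1%:M.
  rewrite mulmxA hG /H mulJ mulfV // (_ : x * _ + _ + _ = 0) ?scale0r ?addr0 //.
  by field; apply/andP; split.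
have [hU _] := mulmx1_unit hGH.
have : J = 0 by rewrite -(mulKmx hU J) hUJ mulmx0.
move/matrixP/(_ (Ordinal hn) (Ordinal hn)); rewrite !mxE => /eqP.
by rewrite oner_eq0.
Qed.
End MatA.

Lemma arith1 (R : realFieldType) (D X Y Z : R) : 2 <= D ->
  0 <= X + 2 * (D - 1)^-1 * Z + (D - 1)^-1 ^+ 2 * Y ->
  X <= 1 / (D ^+ 2 * (D ^+ 2 - 1)) -> Y <= (D - 1) / (D ^+ 2 * (D + 1)) ->
  1 / (D * (D + 1)) <= Z + 1 / D ^+ 2.
Proof.
move=> hD h0 hX hY.
have D0 : D != 0 by apply/negP => /eqP h; rewrite h in hD; lra.
have D1 : D - 1 != 0 by apply/negP => /eqP h; lra.
have D2 : D + 1 != 0 by apply/negP => /eqP h; lra.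
have D3 : D ^+ 2 - 1 != 0.
  rewrite (_ : D ^+ 2 - 1 = (D - 1) * (D + 1)); last by ring.
  by rewrite mulf_neq0.
set e := (D - 1)^-1.
have e0 : 0 < e by rewrite invr_gt0 subr_gt0; lra.
set K := 1 / (D ^+ 2 * (D + 1)).
have eX : 1 / (D ^+ 2 * (D ^+ 2 - 1)) = e * K.
  by rewrite /e /K; field; rewrite D0 D1 D2 D3.
have eY : e * (e * Y) <= e * K.
  apply: ler_wpM2l; first exact: ltW.
  have : e * Y <= e * ((D - 1) / (D ^+ 2 * (D + 1))) by apply: ler_wpM2l => //; exact: ltW.
  by rewrite (_ : e * ((D - 1) / (D ^+ 2 * (D + 1))) = K) // /e /K; field; rewrite D0 D1 D2.
have h1 : 0 <= e * (K + Z).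
  have : 0 <= X + 2 * e * Z + e * (e * Y) by rewrite mulrA -expr2; move: h0; rewrite /e.
  rewrite eX in hX; rewrite mulrDr; lra.
have h2 : 0 <= K + Z by rewrite pmulr_rge0 in h1.
have -> : 1 / (D * (D + 1)) = 1 / D ^+ 2 - K by rewrite /K; field; rewrite D0 D2.
lra.
Qed.

Section QS.
Variables (R : realFieldType) (d : nat) (hd : (2 <= d)%N) (Q : vec R d -> Prop) (hQ : qplex Q).
Local Notation N := (d ^ 2)%N.
Local Notation D := (d%:R : R).

Lemma D2 : (2 : R) <= D. Proof. by rewrite ler_nat. Qed.
Lemma Dne0 : D != 0. Proof. by rewrite pnatr_eq0 -lt0n; apply: leq_trans hd. Qed.
Lemma NE : ((d ^ 2)%N%:R : R) = D ^+ 2. Proof. by rewrite natrX. Qed.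
Lemma ro2E : ro2 R d = (D - 1) / (D ^+ 2 * (D + 1)).
Proof. rewrite /ro2 natrX natrD natrB //; exact: leq_trans hd. Qed.
Lemma polE : ((d * (d + 1))%N%:R : R) = D * (D + 1). Proof. by rewrite natrM natrD. Qed.

Lemma Q_H q : Q q -> inH q. Proof. by move=> /(hQ.1) [[_ h] _]. Qed.

Lemma sum_vsub_c (u : vec R d) : inH u -> \sum_k vsub u (@cvec R d) k = 0.
Proof.
move=> hu; rewrite /vsub sumrB hu /cvec sumr_const card_ord -mulr_natr NE.
have := Dne0 => h; apply/eqP; rewrite subr_eq0; apply/eqP; field.
by [].
Qed.

Lemma dot_c (u q : vec R d) : inH u -> inH q ->
  dot u q = dot (vsub u (@cvec R d)) (vsub q (@cvec R d)) + 1 / D ^+ 2.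
Proof.
move=> hu hq; rewrite /dot.
rewrite (eq_bigr (fun k => (1 * vsub u (@cvec R d) k + 1 / (d ^ 2)%N%:R) *
                           (1 * vsub q (@cvec R d) k + 1 / (d ^ 2)%N%:R)));
  last by move=> k _; rewrite /vsub /cvec !mul1r !subrK.
rewrite sum_aff !sum_vsub_c // addr0 mulr0 addr0 expr1n mul1r NE.
congr (_ + _); have := Dne0 => h; by field.
Qed.

Lemma inball (u : vec R d) : inH u ->
  normsq (vsub u (@cvec R d)) <= 1 / (D ^+ 2 * (D ^+ 2 - 1)) -> Q u.
Proof.
move=> hu hn; apply (hQ.2 u).1; split=> // q Qq.
have [_ [hq hqn]] := hQ.1 q Qq.
rewrite dot_c // polE; apply: (@arith1 R D (normsq (vsub u (@cvec R d))) (normsq (vsub q (@cvec R d))) _ D2 _ hn).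
  have := @normsq_ge0 R d (fun k => vsub u (@cvec R d) k + (D - 1)^-1 * vsub q (@cvec R d) k).
  by rewrite normsq_comb.
by rewrite -ro2E.
Qed.


Lemma qr_mx r (q : vec R d) : inH q -> qr r q = mxact (stretched r) q.
Proof.
move=> hq; apply: functional_extensionality => i; rewrite /qr /mxact.
rewrite (eq_bigr (fun j => (d + 1)%:R * (r i j * q j) - 1 / d%:R * r i j));
  last by move=> j _; ring.
rewrite [RHS](eq_bigr (fun j => (d + 1)%:R * (r i j * q j) - (1 / d%:R * \sum_k r i k) * q j));
  last by move=> j _; rewrite mxE; ring.
by rewrite !sumrB -!mulr_sumr hq mulr1.
Qed.

Lemma image_r_mx r : image_r Q r = image_mx (stretched r) Q.
Proof.
apply: functional_extensionality => u; apply: propositional_extensionality.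
by split => -[q Qq ->]; exists q => //; rewrite qr_mx //; exact: Q_H.
Qed.

Lemma qplex_image (M : 'M[R]_(d ^ 2)) : M^T *m M = 1%:M ->
  (forall i, \sum_j M i j = 1) -> (forall j, \sum_i M i j = 1) ->
  (forall q i, Q q -> 0 <= mxact M q i) -> qplex (image_mx M Q).
Proof.
move=> hO hrow hcol hpos.
have MMT : M *m M^T = 1%:M by apply: mulmx1C.
have Mc : mxact M (@cvec R d) = @cvec R d.
  apply: functional_extensionality => i; rewrite /mxact /cvec -mulr_suml hrow mul1r.
  by [].
have HM q : Q q -> inH (mxact M q).
  by move=> Qq; rewrite /inH sum_mxact //; exact: Q_H.
have Hin q : Q q -> inDelta (mxact M q) /\ inBo (mxact M q).
  move=> Qq; have [_ [_ hn]] := hQ.1 q Qq.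
  split; first by split; [move=> i; exact: hpos | exact: HM].
  split; first exact: HM.
  by rewrite -Mc -mxact_sub /normsq dot_mxact.
split; first by move=> u [q Qq ->]; exact: Hin.
move=> u; split.
  case=> hu hp.
  pose p := mxact M^T u.
  have Qp : Q p.
    apply (hQ.2 p).1; split.
      by rewrite /inH sum_mxact // => j; rewrite -[RHS](hrow j); apply: eq_bigr => i _; rewrite mxE.
    move=> q Qq; rewrite /p -dot_mxactT; apply: hp; by exists q.
  exists p => //; by rewrite /p mxact_mul MMT mxact1.
case=> q Qq ->; split; first exact: HM.
move=> v [q' Qq' ->]; rewrite dot_mxact //.
by have [_ h] := (hQ.2 q).2 Qq; apply: h.
Qed.


Lemma Dp1ne0 : D + 1 != 0.
Proof. have := D2; apply: contraTneq => h. rewrite (_ : D = -1); last by apply/eqP; rewrite -subr_eq0 opprK; apply/eqP. lra. Qed.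

Lemma row_of_col (M : 'M[R]_(d ^ 2)) : M^T *m M = 1%:M ->
  (forall j, \sum_i M i j = 1) -> forall i, \sum_j M i j = 1.
Proof.
move=> hO hcol i; have MMT : M *m M^T = 1%:M by apply: mulmx1C.
rewrite (eq_bigr (fun j => M i j * \sum_k M k j)); last by move=> j _; rewrite hcol mulr1.
rewrite (eq_bigr (fun j => \sum_k M i j * M k j)); last by move=> j _; rewrite mulr_sumr.
rewrite exchange_big /=.
rewrite (eq_bigr (fun k => (M *m M^T) i k)); last by move=> k _; rewrite mxE; apply: eq_bigr => j _; rewrite mxE.
rewrite MMT (eq_bigr (fun k => 1 * (k == i)%:R)); first by rewrite sum_delta.
by move=> k _; rewrite mxE mul1r eq_sym.
Qed.

Lemma cvec_H : inH (@cvec R d).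
Proof.
rewrite /inH /cvec sumr_const card_ord -mulr_natr NE.
have := Dne0 => h; by field.
Qed.

Lemma small_ineq (X : R) : 4 <= X -> 2 * (1 / (2 * X)) ^+ 2 <= 1 / (X * (X - 1)).
Proof.
move=> hX; have X0 : X != 0 by apply: contraTneq hX => ->; lra.
have X1 : X - 1 != 0 by apply: contraTneq hX => /eqP; rewrite subr_eq0 => /eqP ->; lra.
rewrite -subr_ge0 (_ : _ - _ = (X + 1) / (2 * X ^+ 2 * (X - 1))); last first.
  by field; rewrite X0 X1.
apply: divr_ge0; first lra.
apply: mulr_ge0; last lra.
apply: mulr_ge0; [lra | exact: sqr_ge0].
Qed.

Lemma colsum (M : 'M[R]_(d ^ 2)) : qplex (image_mx M Q) -> forall j, \sum_i M i j = 1.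
Proof.
move=> hqM.
pose f j := \sum_i M i j.
have h1 q : Q q -> \sum_j f j * q j = 1.
  move=> Qq; have [[_ hs] _] := hqM.1 (mxact M q) (ex_intro2 _ _ q Qq erefl).
  rewrite -hs /mxact exchange_big; apply: eq_bigr => j _; by rewrite /f mulr_suml.
have Qc : Q (@cvec R d).
  apply: inball cvec_H _.
  rewrite (_ : normsq _ = 0); last by rewrite /normsq /dot big1 // => k _; rewrite /vsub subrr mulr0.
  apply: divr_ge0 => //; apply: mulr_ge0; first exact: sqr_ge0.
  rewrite subr_ge0; have := D2; nra.
pose t := 1 / (2 * D ^+ 2).
have t0 : t != 0 by rewrite /t div1r invr_eq0 mulf_neq0 // ?pnatr_eq0 // expf_neq0 // Dne0.
have hkl k l : f k = f l.
  pose p := fun j => @cvec R d j + t * ((j == k)%:R - (j == l)%:R).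
  have vp : vsub p (@cvec R d) = fun j => t * ((j == k)%:R - (j == l)%:R).
    by apply: functional_extensionality => j; rewrite /vsub /p addrC addKr.
  have Hp : inH p.
    have := cvec_H; rewrite /inH /p big_split /= => ->.
    by rewrite -mulr_sumr sumrB (eq_bigr (fun j => 1 * (j == k)%:R)) ?sum_delta 
      1?(eq_bigr (fun j => 1 * (j == l)%:R)) ?sum_delta ?subrr ?mulr0 ?addr0 // => j _; rewrite mul1r.
  have Qp : Q p.
    apply: inball Hp _; rewrite vp.
    have -> : normsq (fun j => t * ((j == k)%:R - (j == l)%:R)) = t ^+ 2 * (2 - 2 * (k == l)%:R).
      rewrite /normsq /dot.
      rewrite (eq_bigr (fun j => t ^+ 2 * (((j == k)%:R - (j == l)%:R) * (j == k)%:R) -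
                                 t ^+ 2 * (((j == k)%:R - (j == l)%:R) * (j == l)%:R)));
        last by move=> j _; ring.
      rewrite sumrB -!mulr_sumr !sum_delta eqxx (eq_sym l k).
      by rewrite eqxx; case: (k == l); rewrite /=; ring.
    apply: (@le_trans _ _ (2 * (1 / (2 * D ^+ 2)) ^+ 2)); last first.
      apply: small_ineq; have := D2 => h.
      rewrite (_ : 4 = 2 * 2); last by ring.
      by rewrite expr2; apply: ler_pM => //; lra.
    rewrite -/t; case: (k == l); rewrite /=.
      rewrite mulr1 subrr mulr0; apply: mulr_ge0; [lra | exact: sqr_ge0].
    by rewrite mulr0 subr0 mulrC.
  have := h1 p Qp; rewrite /p.
  rewrite (eq_bigr (fun j => f j * @cvec R d j + t * (f j * (j == k)%:R - f j * (j == l)%:R)));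
    last by move=> j _; ring.
  rewrite big_split /= h1 // -mulr_sumr sumrB !sum_delta => /eqP.
  rewrite -subr_eq0 addrAC subrr add0r mulf_eq0 (negbTE t0) /= subr_eq0 => /eqP ->.
  done.
move=> j; rewrite -/(f j); have hc := h1 _ Qc.
have : \sum_j0 f j0 * @cvec R d j0 = f j * \sum_j0 @cvec R d j0.
  rewrite mulr_sumr; apply: eq_bigr => j0 _; by rewrite (hkl j0 j).
by rewrite hc cvec_H mulr1 => <-.
Qed.


Lemma part2 (M : 'M[R]_(d ^ 2)) : M^T *m M = 1%:M -> qplex (image_mx M Q) ->
  exists r, type_preserving Q r /\ stretched r = M.
Proof.
move=> hO hqM.
have hcol := colsum M hqM.
have hrow := row_of_col M hO hcol.
have D0 := Dne0; have D1 := Dp1ne0.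
pose r := fun i j : 'I_(d ^ 2) => (M i j + 1 / d%:R) / (d + 1)%:R.
have rsum i : \sum_k r i k = 1.
  rewrite /r -mulr_suml big_split /= hrow sumr_const card_ord -[_ *+ N]mulr_natr NE natrD.
  by field; rewrite D0 D1.
have hst : stretched r = M.
  apply/matrixP => i j; rewrite mxE rsum /r natrD; by field; rewrite D0 D1.
exists r; split => //; split; last by rewrite image_r_mx hst.
split; last first.
  move=> j; rewrite /r -mulr_suml big_split /= hcol sumr_const card_ord -[_ *+ N]mulr_natr NE natrD.
  by field; rewrite D0 D1.
move=> i j.
have Qp : Q (r i).
  apply (hQ.2 (r i)).1; split; first exact: rsum.
  move=> q Qq; have [[hpos _] _] := hqM.1 (mxact M q) (ex_intro2 _ _ q Qq erefl).
  have hq := Q_H q Qq.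
  have -> : dot (r i) q = (mxact M q i + 1 / d%:R) / (d + 1)%:R.
    rewrite /dot /r (eq_bigr (fun j => (M i j * q j + 1 / d%:R * q j) / (d + 1)%:R));
      last by move=> k _; ring.
    by rewrite -mulr_suml big_split /= -mulr_sumr hq mulr1.
  have := hpos i; rewrite polE natrD => h.
  rewrite ler_pdivlMr; last by have := D2; lra.
  rewrite (_ : 1 / (D * (D + 1)) * (D + 1) = 1 / D); last by field; rewrite D0 D1.
  lra.
by have [[h _] _] := hQ.1 _ Qp; apply: h.
Qed.


Lemma Npos : (0 < d ^ 2)%N. Proof. by rewrite expn_gt0 (ltn_trans _ hd). Qed.
Lemma Ngt1 : (1 < d ^ 2)%N.
Proof. by rewrite -[1%N]/(1 ^ 2)%N ltn_exp2r // (ltn_trans _ hd). Qed.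

Lemma part1 (s : 'I_(d ^ 2) -> vec R d) :
  (forall i, Q (s i) /\ inSo (s i)) -> regular_simplex s ->
  type_preserving Q (fun i j => s i j) /\
  (forall i j, stretched (fun i j => s i j) i j = (d + 1)%:R * s i j - 1 / d%:R).
Proof.
move=> hs [hinj [a ha]].
have D0 := Dne0; have D1 := Dp1ne0.
have sH i : inH (s i) by case: (hs i) => _ [].
have hst i j : stretched (fun i j => s i j) i j = (d + 1)%:R * s i j - 1 / d%:R.
  by rewrite mxE (sH i) mulr1.
split => //.
set M := stretched (fun i j => s i j).
pose c := @cvec R d.
pose U : 'M[R]_(d ^ 2) := \matrix_(i, k) vsub (s i) c k.
have hUJ : U *m (const_mx 1 : 'M[R]_(d ^ 2)) = 0.
  apply/matrixP => i j; rewrite !mxE (eq_bigr (fun k => vsub (s i) c k)); first exact: sum_vsub_c.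
  by move=> k _; rewrite /U !mxE mulr1.
pose x := a / 2; pose y := ro2 R d - a / 2.
have hno i : normsq (vsub (s i) c) = ro2 R d by case: (hs i) => _ [].
have hGij i j : dot (vsub (s i) c) (vsub (s j) c) = x * (i == j)%:R + y.
  case: (eqVneq i j) => [<-|hij].
    by rewrite /= mulr1 /x /y addrC subrK; exact: hno.
  rewrite mulr0 add0r.
  have := ha i j hij.
  rewrite (_ : vsub (s i) (s j) = vsub (vsub (s i) c) (vsub (s j) c)); last first.
    by apply: functional_extensionality => k; rewrite /vsub; ring.
  rewrite normsq_sub !hno => hA; rewrite /y /x -hA; by field.
have hG : U *m U^T = x%:M + y *: (const_mx 1 : 'M[R]_(d ^ 2)).
  apply/matrixP => i j; rewrite !mxE mulr1 -mulr_natr -hGij /dot; apply: eq_bigr => k _; by rewrite /U !mxE.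
have hx0 : x != 0.
  pose i0 : 'I_(d ^ 2) := Ordinal Npos; pose i1 : 'I_(d ^ 2) := Ordinal Ngt1.
  have h01 : i0 != i1 by [].
  rewrite /x mulf_eq0 negb_or invr_eq0 pnatr_eq0 andbT.
  apply/eqP => a0; move: (ha i0 i1 h01); rewrite a0 => /eqP.
  rewrite /normsq /dot psumr_eq0; last by move=> k _; rewrite -expr2 sqr_ge0.
  move=> /allP hall; move/negP: h01; apply; apply/eqP; apply: hinj.
  apply: functional_extensionality => k.
  have := hall k (mem_index_enum k); rewrite /= mulf_eq0 orbb /vsub subr_eq0 => /eqP.
  done.
have hkey := @keyA R (d ^ 2) U x y Npos hUJ hG hx0.
have hx : x = 1 / (D + 1) ^+ 2.
  have e1 : x * (D ^+ 2 - 1) = D ^+ 2 * ro2 R d.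
    apply/eqP; rewrite -subr_eq0.
    rewrite (_ : _ - _ = - (x + (d ^ 2)%N%:R * y)); first by rewrite hkey oppr0.
    by rewrite NE /y /x; ring.
  have D3 : D ^+ 2 - 1 != 0.
    rewrite (_ : D ^+ 2 - 1 = (D - 1) * (D + 1)); last by ring.
    rewrite mulf_neq0 //; have := D2; apply: contraTneq => /eqP; rewrite subr_eq0 => /eqP ->; lra.
  rewrite (_ : x = x * (D ^+ 2 - 1) / (D ^+ 2 - 1)); last by field.
  rewrite e1 ro2E; field; rewrite D0 D1 /=.
  move: D3; rewrite (_ : D ^+ 2 - 1 = (D - 1) * (D + 1)); last by ring.
  by rewrite andbT.
have hy : y = - (1 / (D ^+ 2 * (D + 1) ^+ 2)).
  have hk : x + D ^+ 2 * y = 0 by rewrite -NE.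
  have D4 : D ^+ 2 != 0 by rewrite expf_neq0.
  rewrite (_ : y = (x + D ^+ 2 * y - x) / D ^+ 2); last by field.
  by rewrite hk hx; field; rewrite D0 D1.
have Mik i k : M i k = (d + 1)%:R * vsub (s i) c k + 1 / (d ^ 2)%N%:R.
  by rewrite /M hst /vsub /c /cvec NE natrD; field.
have MMT : M *m M^T = 1%:M.
  apply/matrixP => i j; rewrite mxE [RHS]mxE.
  rewrite (eq_bigr (fun k => ((d + 1)%:R * vsub (s i) c k + 1 / (d ^ 2)%N%:R) *
                             ((d + 1)%:R * vsub (s j) c k + 1 / (d ^ 2)%N%:R)));
    last by move=> k _; rewrite [M^T k j]mxE !Mik.
  rewrite sum_aff !sum_vsub_c // addr0 mulr0 addr0 hGij hx hy NE natrD.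
  case: (i == j); rewrite /=; field; by rewrite D0 D1.
have hO : M^T *m M = 1%:M by apply: mulmx1C.
have hrow i : \sum_j M i j = 1.
  rewrite (eq_bigr (fun j => (d + 1)%:R * s i j - 1 / d%:R)); last by move=> j _; rewrite hst.
  rewrite sumrB -mulr_sumr (sH i) sumr_const card_ord -[_ *+ N]mulr_natr NE natrD.
  by field.
have hcol j : \sum_i M i j = 1.
  have := @row_of_col M^T; rewrite trmxK => /(_ MMT) h.
  have hc' : forall j, \sum_i M^T i j = 1.
    by move=> i; rewrite -(hrow i); apply: eq_bigr => k _; rewrite mxE.
  have := h hc' j; rewrite (eq_bigr (fun i => M i j)) // => i _; by rewrite mxE.
split.
  split; first by move=> i j; have [[h _] _] := hQ.1 _ (hs i).1; exact: h.
  move=> j; have := hcol j.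
  rewrite (eq_bigr (fun i => (d + 1)%:R * s i j - 1 / d%:R)); last by move=> i _; rewrite hst.
  rewrite sumrB -mulr_sumr sumr_const card_ord -[_ *+ N]mulr_natr NE natrD => h.
  apply: (mulfI D1); rewrite mulr1; move/eqP: h; rewrite subr_eq => /eqP ->.
  by field.
rewrite image_r_mx; apply: qplex_image => //.
move=> q i Qq.
have hq := Q_H q Qq.
rewrite /mxact (eq_bigr (fun j => (d + 1)%:R * (s i j * q j) - 1 / d%:R * q j));
  last by move=> j _; rewrite hst; ring.
rewrite sumrB -!mulr_sumr hq mulr1.
have [_ h] := (hQ.2 (s i)).2 (hs i).1.
have := h q Qq; rewrite polE natrD /dot => h2.
rewrite subr_ge0.
rewrite (_ : 1 / D = (D + 1) * (1 / (D * (D + 1)))); last by field; rewrite D0 D1.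
by apply: ler_wpM2l => //; have := D2; lra.
Qed.

End QS.

Theorem mainTheorem11 (R : realFieldType) (d : nat) (hd : (2 <= d)%N)
  (Q : vec R d -> Prop) (hQ : qplex Q) :
  (forall s : 'I_(d ^ 2) -> vec R d,
     (forall i, Q (s i) /\ inSo (s i)) -> regular_simplex s ->
     type_preserving Q (fun i j => s i j) /\
     (forall i j, stretched (fun i j => s i j) i j
                  = (d + 1)%:R * s i j - 1 / d%:R)) /\
  (forall M : 'M[R]_(d ^ 2),
     orthogonal_mx M -> qplex (image_mx M Q) ->
     exists r, type_preserving Q r /\ stretched r = M).
Proof.
split.
  by move=> s hs hr; exact: (@part1 R d hd Q hQ s hs hr).
by move=> M hO hqM; exact: (@part2 R d hd Q hQ M hO hqM).
Qed.
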